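(* Let $G$ be a graph on $n$ vertices and let $SV=(v_1,\dots,v_n)$ be a permutation of $V(G)$. Then there exist sets $VC_1,\dots,VC_{n-1}$ such that each $VC_i$ is a minimum-cardinality vertex cover of $G_i$ ($1\le i<n$) and, for each $1 \leq i < n-1$, $VC_i \cap (V(G)\setminus V_{i+1}) \subseteq VC_{i+1}$.
   Context: For $1\le i\le n$, $V_i=\{v_1,\dots,v_i\}$, and $G_i$ is the graph with vertex set $V(G)$ whose edges are exactly the edges of $G$ having one end in $V_i$ and the other in $V(G)\setminus V_i$. A vertex cover of a graph is a set of vertices incident to all its edges. *)

(* Defs.v *)
From mathcomp Require Import all_boot.
Set Implicit Arguments. Unset Strict Implicit. Unset Printing Implicit Defensive.

Definition simple_graph (T : finType) (e : rel T) : Prop :=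
  symmetric e /\ irreflexive e.

(* V_i = {v_1,...,v_i} for the ordering sv : 'I_n -> T (0-based: sv 0 = v_1). *)
Definition prefix_set (T : finType) (n : nat) (sv : 'I_n -> T) (i : nat) : {set T} :=
  [set sv j | j : 'I_n & (j < i)%N].

(* Edge relation of G_i: edges of G with exactly one end in V_i. *)
Definition cut_graph (T : finType) (e : rel T) (V : {set T}) : rel T :=
  fun x y => e x y && ((x \in V) != (y \in V)).

Definition is_vertex_cover (T : finType) (e : rel T) (C : {set T}) : Prop :=
  forall x y, e x y -> (x \in C) || (y \in C).

Definition is_min_vertex_cover (T : finType) (e : rel T) (C : {set T}) : Prop :=
  is_vertex_cover e C /\
  forall C' : {set T}, is_vertex_cover e C' -> (#|C| <= #|C'|)%N.

(* Main.v *)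
Require Import Defs.
From mathcomp Require Import all_boot zify.

Definition vcb {T : finType} (e : rel T) (C : {set T}) : bool :=
  [forall x, forall y, e x y ==> (x \in C) || (y \in C)].

Lemma vcbP {T : finType} (e : rel T) C : reflect (is_vertex_cover e C) (vcb e C).
Proof.
apply: (iffP forallP) => H.
  move=> x y exy; have /forallP/(_ y)/implyP := H x; exact.
move=> x; apply/forallP => y; apply/implyP; exact: H.
Qed.

Lemma cardEsum (T : finType) (A : {set T}) : #|A| = \sum_(x : T) (x \in A : nat).
Proof. by rewrite -sum1_card big_mkcond /=; apply: eq_bigr => x _; case: (x \in A). Qed.

Lemma exchange (T : finType) (e : rel T) (S S' C D : {set T}) :
  S \subset S' ->
  is_min_vertex_cover (cut_graph e S) C ->
  is_vertex_cover (cut_graph e S') D ->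
  exists D', [/\ is_vertex_cover (cut_graph e S') D',
                 C :&: ~: S' \subset D' & #|D'| <= #|D| ].
Proof.
move=> sSS' [covC minC] covD.
set D' := [set x | ((x \in S) && (x \in C) && (x \in D))
                 || ((x \in S') && (x \notin S) && (x \in D))
                 || ((x \notin S') && ((x \in C) || (x \in D)))].
set E := [set x | ((x \in S) && ((x \in C) || (x \in D)))
                 || ((x \in S') && (x \notin S) && (x \in C))
                 || ((x \notin S') && (x \in C) && (x \in D))].
have sub x : x \in S -> x \in S' by move=> h; exact: (subsetP sSS').
have covD' : is_vertex_cover (cut_graph e S') D'.
  move=> x y /andP [exy hxy]; rewrite !inE.
  have := covD x y; rewrite /cut_graph exy hxy /= => /(_ isT).
  have := covC x y; rewrite /cut_graph exy /=.
  move: hxy (sub x) (sub y).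
  by case: (x \in S); case: (y \in S); case: (x \in S'); case: (y \in S');
     case: (x \in C); case: (y \in C); case: (x \in D); case: (y \in D);
     move=> //= _ h1 h2; rewrite ?h1 ?h2 //= => H; rewrite H.
have covE : is_vertex_cover (cut_graph e S) E.
  move=> x y /andP [exy hxy]; rewrite !inE.
  have := covC x y; rewrite /cut_graph exy hxy /= => /(_ isT).
  have := covD x y; rewrite /cut_graph exy /=.
  move: hxy (sub x) (sub y).
  by case: (x \in S); case: (y \in S); case: (x \in S'); case: (y \in S');
     case: (x \in C); case: (y \in C); case: (x \in D); case: (y \in D);
     move=> //= _ h1 h2; rewrite ?h1 ?h2 //= => H; rewrite H.
have card : #|D'| + #|E| = #|C| + #|D|.
  rewrite !cardEsum -!big_split /=; apply: eq_bigr => x _; rewrite !inE.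
  move: (sub x).
  by case: (x \in S); case: (x \in S'); case: (x \in C); case: (x \in D); move=> /= h; rewrite ?addn0 //; have := h isT.
exists D'; split => //.
  apply/subsetP => x; rewrite !inE => /andP [hC hS]; rewrite hC hS /=.
  by rewrite orbT.
have := minC E covE; lia.
Qed.

Definition mincov {T : finType} (e : rel T) : {set T} :=
  [arg min_(C < setT | vcb e C) #|C|].

Definition step {T : finType} (e : rel T) (S' C : {set T}) : {set T} :=
  [arg min_(D < setT | vcb e D && (C :&: ~: S' \subset D)) #|D|].

Lemma mincovP {T : finType} (e : rel T) : is_min_vertex_cover e (mincov e).
Proof.
rewrite /mincov; case: arg_minnP.
  by apply/forallP => x; apply/forallP => y; rewrite in_setT implybT.
move=> C /vcbP cC min; split=> // C' /vcbP; exact: min.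
Qed.

Lemma stepP {T : finType} (e : rel T) (S S' C : {set T}) :
  S \subset S' -> is_min_vertex_cover (cut_graph e S) C ->
  is_min_vertex_cover (cut_graph e S') (step (cut_graph e S') S' C) /\
  C :&: ~: S' \subset step (cut_graph e S') S' C.
Proof.
move=> sSS' mC; rewrite /step; case: arg_minnP.
  rewrite subsetT andbT.
  by apply/forallP => x; apply/forallP => y; rewrite in_setT implybT.
move=> D /andP [/vcbP cD sD] min; split=> //; split=> // C' cC'.
have [cD0 minD0] := mincovP (cut_graph e S').
have [D' [cD' sD' le]] := @exchange T e S S' C _ sSS' mC cD0.
have hD' : vcb (cut_graph e S') D' && (C :&: ~: S' \subset D').
  by rewrite sD' andbT; apply/vcbP.
exact: (leq_trans (min D' hD') (leq_trans le (minD0 _ cC'))).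
Qed.

Lemma prefix_sub (T : finType) (n : nat) (sv : 'I_n -> T) i :
  prefix_set sv i \subset prefix_set sv i.+1.
Proof.
apply/subsetP => x /imsetP [j]; rewrite inE => hj ->.
by apply/imsetP; exists j => //; rewrite inE ltnS ltnW.
Qed.

Theorem lemma4 (T : finType) (e : rel T) (sv : 'I_#|T| -> T) :
  simple_graph e -> bijective sv ->
  exists VC : nat -> {set T},
    (forall i : nat, (1 <= i < #|T|)%N ->
       is_min_vertex_cover (cut_graph e (prefix_set sv i)) (VC i)) /\
    (forall i : nat, (1 <= i < #|T|.-1)%N ->
       VC i :&: ~: prefix_set sv i.+1 \subset VC i.+1).
Proof.
move=> _ _.
pose VC := fix VC (i : nat) : {set T} :=
  match i with
  | 0 => mincov (cut_graph e (prefix_set sv 0))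
  | i'.+1 => step (cut_graph e (prefix_set sv i'.+1)) (prefix_set sv i'.+1) (VC i')
  end.
have H : forall i, is_min_vertex_cover (cut_graph e (prefix_set sv i)) (VC i).
  elim=> [|i IH]; first exact: mincovP.
  exact: (@stepP T e _ _ _ (prefix_sub _ _ sv i) IH).1.
exists VC; split=> [i _|i _]; first exact: H.
exact: (@stepP T e _ _ _ (prefix_sub _ _ sv i) (H i)).2.
Qed.
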